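(* Fix a positive integer $s$, let $h_{s,i,j}$ be as in the context, and set $\mathcal{H}(s)=\sum_{i\ge 0}\sum_{j\ge i+1}h_{s,i,j}x^jz^i$. Then $$\mathcal{H}(s)=-\frac{(1-xz)^s}{1-z}-\frac{x(1-xz)^{2s}}{(1-x)^{s+1}}+\frac{(1-xz)^{2s}}{(1-x)^s(1-z)}.$$
   Context: For a fixed positive integer $s$, the numbers $h_{s,i,j}$ (integers $i\ge 0$, $j$) are defined recursively by: $h_{s,i,j}=0$ if $j\le i$; for $i=0$ and $j\ge 1$, $h_{s,0,j}=\binom{s+j-1}{j}\frac{s-j}{s}$; for $i>0$ and $j>i$, $h_{s,i,j}=-\frac{s-j+1}{i}h_{s,i-1,j-1}-\frac{j-i}{i}h_{s,i-1,j}$. The identity is of formal power series in $x,z$. *)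

(* Defs.v *)
From HB Require Import structures.
From mathcomp Require Import all_boot all_order all_algebra.
Set Implicit Arguments. Unset Strict Implicit. Unset Printing Implicit Defensive.
Import Order.TTheory GRing.Theory Num.Theory.
Local Open Scope ring_scope.

Fixpoint hcoef (s i j : nat) : rat :=
  match i with
  | 0 => if (j <= 0)%N then 0
         else ('C(s + j - 1, j))%:R * ((s%:R - j%:R) / s%:R)
  | i'.+1 => if (j <= i)%N then 0
             else - ((s%:R - j%:R + 1) / i%:R) * hcoef s i' j.-1
                  - ((j%:R - i%:R) / i%:R) * hcoef s i' j
  end.

(* Formal power series in two variables x, z over rat:
   f j i is the coefficient of x^j z^i. *)
Definition fps := nat -> nat -> rat.

Definition fps_add (f g : fps) : fps := fun j i => f j i + g j i.
Definition fps_opp (f : fps) : fps := fun j i => - f j i.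
Definition fps_mul (f g : fps) : fps := fun j i =>
  \sum_(a < j.+1) \sum_(b < i.+1) f a b * g (j - a)%N (i - b)%N.
Definition fps_one : fps := fun j i => if (j == 0%N) && (i == 0%N) then 1 else 0.
Definition fps_x : fps := fun j i => if (j == 1%N) && (i == 0%N) then 1 else 0.
Definition fps_z : fps := fun j i => if (j == 0%N) && (i == 1%N) then 1 else 0.
Definition fps_exp (f : fps) (n : nat) : fps := iterop n fps_mul f fps_one.

Declare Scope fps_scope.
Delimit Scope fps_scope with fps.
Notation "f + g" := (fps_add f g) : fps_scope.
Notation "f - g" := (fps_add f (fps_opp g)) : fps_scope.
Notation "- f" := (fps_opp f) : fps_scope.
Notation "f * g" := (fps_mul f g) : fps_scope.
Notation "f ^+ n" := (fps_exp f n) : fps_scope.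
Notation "1" := fps_one : fps_scope.
Notation "'x" := fps_x : fps_scope.
Notation "'z" := fps_z : fps_scope.

(* H(s) = sum_{i>=0} sum_{j>=i+1} h_{s,i,j} x^j z^i ; h vanishes for j <= i. *)
Definition Hser (s : nat) : fps := fun j i => hcoef s i j.

(* Main.v *)
Require Import Defs.
From mathcomp Require Import all_boot all_order all_algebra.
From HB Require Import structures.
From mathcomp Require Import boolp ring zify.
Set Warnings "-notation-overridden,-ambiguous-paths,-redundant-canonical-projection".
Set Implicit Arguments. Unset Strict Implicit. Unset Printing Implicit Defensive.
Import Order.TTheory GRing.Theory Num.Theory.
Local Open Scope ring_scope.

Section Ser.
Variable R : comNzRingType.
Definition ser := nat -> R.
HB.instance Definition _ := Choice.copy ser (nat -> R).
Definition sadd (f g : ser) : ser := fun n => f n + g n.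
Definition sopp (f : ser) : ser := fun n => - f n.
Definition szero : ser := fun _ => 0.
Lemma saddA : associative sadd.
Proof. by move=> f g h; apply: funext => n; rewrite /sadd addrA. Qed.
Lemma saddC : commutative sadd.
Proof. by move=> f g; apply: funext => n; rewrite /sadd addrC. Qed.
Lemma sadd0 : left_id szero sadd.
Proof. by move=> f; apply: funext => n; rewrite /sadd add0r. Qed.
Lemma saddN : left_inverse szero sopp sadd.
Proof. by move=> f; apply: funext => n; rewrite /sadd /sopp addNr. Qed.
HB.instance Definition _ := GRing.isZmodule.Build ser saddA saddC sadd0 saddN.
Definition smul (f g : ser) : ser := fun n => \sum_(a < n.+1) f a * g (n - a)%N.
Definition sone : ser := fun n => (n == 0)%N%:R.
Lemma smul_rev f g n : smul f g n = \sum_(a < n.+1) f (n - a)%N * g a.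
Proof.
rewrite /smul (reindex_inj rev_ord_inj) /=.
by apply: eq_bigr => j _; rewrite (sub_ordK j).
Qed.
Lemma smulA : associative smul.
Proof.
move=> p q r; apply: funext => i; rewrite [LHS]/smul [RHS]smul_rev.
pose coef3 j k := p j * (q (i - j - k)%N * r k).
transitivity (\sum_(j < i.+1) \sum_(k < i.+1 | (k <= i - j)%N) coef3 j k).
  apply: eq_bigr => /= j _; rewrite smul_rev big_distrr /=.
  by rewrite (big_ord_narrow_leq (leq_subr _ _)).
rewrite (exchange_big_dep predT) //=; apply: eq_bigr => k _.
transitivity (\sum_(j < i.+1 | (j <= i - k)%N) coef3 j k).
  apply: eq_bigl => j; rewrite -ltnS -(ltnS j) -!subSn ?leq_ord //.
  by rewrite -subn_gt0 -(subn_gt0 j) -!subnDA addnC.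
rewrite (big_ord_narrow_leq (leq_subr _ _)) big_distrl /=.
by apply: eq_bigr => j _; rewrite /coef3 -!subnDA addnC mulrA.
Qed.
Lemma smulC : commutative smul.
Proof.
move=> f g; apply: funext => n; rewrite smul_rev /smul.
by apply: eq_bigr => a _; rewrite mulrC.
Qed.
Lemma smul1 : left_id sone smul.
Proof.
move=> f; apply: funext => n; rewrite /smul big_ord_recl /= mul1r subn0 big1 ?addr0 //.
by move=> i _; rewrite /sone /= mul0r.
Qed.
Lemma smulDl : left_distributive smul sadd.
Proof.
move=> f g h; apply: funext => n; rewrite /smul /sadd -big_split /=.
by apply: eq_bigr => a _; rewrite mulrDl.
Qed.
Lemma sone_neq0 : sone != 0.
Proof.
apply/eqP => /(congr1 (fun f : ser => f 0%N)) /=; rewrite /sone /=.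
by move/eqP; rewrite oner_eq0.
Qed.
HB.instance Definition _ := GRing.Zmodule_isComNzRing.Build ser smulA smulC smul1 smulDl sone_neq0.

Lemma serD (f g : ser) n : (f + g) n = f n + g n. Proof. by []. Qed.
Lemma serN (f : ser) n : (- f) n = - f n. Proof. by []. Qed.
Lemma ser0 n : (0 : ser) n = 0. Proof. by []. Qed.
Lemma serM (f g : ser) n : (f * g) n = \sum_(a < n.+1) f a * g (n - a)%N. Proof. by []. Qed.
Lemma ser1 n : (1 : ser) n = (n == 0)%N%:R. Proof. by []. Qed.
Lemma serB (f g : ser) n : (f - g) n = f n - g n. Proof. by []. Qed.
Lemma ser_sum I (r : seq I) (P : pred I) (F : I -> ser) n :
  (\sum_(i <- r | P i) F i) n = \sum_(i <- r | P i) F i n.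
Proof. by elim/big_rec2: _ => // i y1 y2 _ <-. Qed.
Lemma ser_natmul (f : ser) k n : (f *+ k) n = f n *+ k.
Proof. by elim: k => [|k IH]; rewrite ?mulr0n // !mulrS serD IH. Qed.
End Ser.

Section Mono.
Variable R : comNzRingType.
Definition smono (p : nat) (c : R) : ser R := fun n => if n == p then c else 0.
Lemma smonoM p c (g : ser R) n :
  (smono p c * g) n = if (p <= n)%N then c * g (n - p)%N else 0.
Proof.
rewrite serM (eq_bigr (fun a : 'I_n.+1 => if (a == p :> nat) then c * g (n - p)%N else 0)).
  by rewrite -big_mkcond (big_ord1_eq _ (fun _ => c * g (n - p)%N)) ltnS.
by move=> a _; rewrite /smono; case: eqP => [->|]; rewrite ?mul0r.
Qed.
End Mono.


Definition S1 := ser rat.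
Definition T := ser S1.

Lemma coefM (f g : T) j i :
  (f * g) j i = \sum_(a < j.+1) \sum_(b < i.+1) f a b * g (j - a)%N (i - b)%N.
Proof. by rewrite serM ser_sum. Qed.

Definition mono (p q : nat) (c : rat) : T := smono p (smono q c).

Lemma monoM p q c (g : T) j i :
  (mono p q c * g) j i =
  if (p <= j)%N && (q <= i)%N then c * g (j - p)%N (i - q)%N else 0.
Proof.
rewrite smonoM; case: (p <= j)%N => /=; last by [].
by rewrite smonoM.
Qed.

Lemma extT (f g : T) : (forall j i, f j i = g j i) -> f = g.
Proof. by move=> H; apply: funext => j; apply: funext => i; apply: H. Qed.

Lemma fps_mulE (f g : fps) : fps_mul f g = (f : T) * (g : T).
Proof. by apply: extT => j i; rewrite coefM. Qed.
Lemma fps_addE (f g : fps) : fps_add f g = (f : T) + (g : T).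
Proof. by []. Qed.
Lemma fps_oppE (f : fps) : fps_opp f = - (f : T).
Proof. by []. Qed.
Lemma coef1 j i : (1 : T) j i = ((j == 0%N) && (i == 0%N))%:R.
Proof. by rewrite ser1 ser_natmul ser1; case: (j == 0%N); case: (i == 0%N). Qed.
Lemma fps_oneE : fps_one = (1 : T).
Proof. by apply: extT => j i; rewrite coef1 /fps_one; case: ifP. Qed.
Definition xT : T := mono 1 0 1.
Definition zT : T := mono 0 1 1.
Lemma fps_xE : fps_x = xT.
Proof. by apply: extT => j i; rewrite /fps_x /xT /mono /smono; case: (j == 1%N); case: (i == 0%N). Qed.
Lemma fps_zE : fps_z = zT.
Proof. by apply: extT => j i; rewrite /fps_z /zT /mono /smono; case: (j == 0%N); case: (i == 1%N). Qed.
Lemma fps_expE (f : fps) n : fps_exp f n = (f : T) ^+ n.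
Proof.
case: n => [|n]; first by rewrite /fps_exp /= fps_oneE.
rewrite /fps_exp iteropS; elim: n => [|n IH]; first by rewrite expr1.
by rewrite iterS IH fps_mulE -exprS.
Qed.

Definition th_def (k : bool) (f : T) : T := fun j i => (if k then j else i)%:R * f j i.
Fact th_key : unit. Proof. by []. Qed.
Definition th := locked_with th_key th_def.

Lemma thE k (f : T) j i : th k f j i = (if k then j else i)%:R * f j i.
Proof. by rewrite /th locked_withE. Qed.
Lemma thD k (f g : T) : th k (f + g) = th k f + th k g.
Proof. by apply: extT => j i; rewrite !serD !thE serD mulrDr. Qed.
Lemma thN k (f : T) : th k (- f) = - th k f.
Proof. by apply: extT => j i; rewrite !serN !thE serN mulrN. Qed.
Lemma thB k (f g : T) : th k (f - g) = th k f - th k g.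
Proof. by rewrite thD thN. Qed.
Lemma th1 k : th k 1 = 0.
Proof.
apply: extT => j i; rewrite thE coef1 /=.
by case: k; case: j => [|j]; case: i => [|i]; rewrite /= ?mulr0 ?mul0r.
Qed.
Lemma thM k (f g : T) : th k (f * g) = th k f * g + f * th k g.
Proof.
apply: extT => j i; rewrite serD serD thE !coefM mulr_sumr -big_split /=.
apply: eq_bigr => a _; rewrite mulr_sumr -big_split /=; apply: eq_bigr => b _.
rewrite !thE.
have ha : (a <= j)%N by rewrite -ltnS ltn_ord.
have hb : (b <= i)%N by rewrite -ltnS ltn_ord.
case: k.
  by rewrite -{1}(subnKC ha) natrD; ring.
by rewrite -{1}(subnKC hb) natrD; ring.
Qed.
Lemma thP k (f : T) n : th k (f ^+ n.+1) = n.+1%:R * f ^+ n * th k f.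
Proof.
elim: n => [|n IH]; first by rewrite expr1 expr0 mulr1 mul1r.
by rewrite exprS thM IH !exprS; ring.
Qed.
Lemma thx_x : th true xT = xT.
Proof.
apply: extT => j i; rewrite thE /xT /mono /smono.
by case: (j =P 1%N) => [->|_]; rewrite ?mul1r ?mulr0.
Qed.
Lemma thz_x : th false xT = 0.
Proof.
apply: extT => j i; rewrite thE /xT /mono /smono.
case: (j =P 1%N) => [_|_]; last by rewrite mulr0.
by case: (i =P 0%N) => [->|_]; rewrite ?mul0r ?mulr0.
Qed.
Lemma thx_z : th true zT = 0.
Proof.
apply: extT => j i; rewrite thE /zT /mono /smono.
by case: (j =P 0%N) => [->|_]; rewrite ?mul0r ?mulr0.
Qed.
Lemma thz_z : th false zT = zT.
Proof.
apply: extT => j i; rewrite thE /zT /mono /smono.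
case: (j =P 0%N) => [_|_]; last by rewrite mulr0.
by case: (i =P 1%N) => [->|_]; rewrite ?mul1r ?mulr0.
Qed.
Lemma natM n (g : T) j i : ((n%:R : T) * g) j i = n%:R * g j i.
Proof. by rewrite mulr_natl !ser_natmul mulr_natl. Qed.
Lemma coef_z (F : T) j i : (zT * F) j i.+1 = F j i.
Proof. by rewrite monoM /= subn0 subn1 mul1r. Qed.
Lemma coef_z0 (F : T) j : (zT * F) j 0%N = 0.
Proof. by rewrite monoM andbC. Qed.
Lemma coef_x (F : T) j i : (xT * F) j.+1 i = F j i.
Proof. by rewrite monoM /= subn0 subn1 mul1r. Qed.
Lemma coef_x0 (F : T) i : (xT * F) 0%N i = 0.
Proof. by rewrite monoM. Qed.



Definition Lop (s : nat) (F : T) : T :=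
  th false F + zT * th true F - zT * th false F - zT * F
  + s%:R * (xT * (zT * F)) - xT * (zT * th true F).

Section Main.
Variables (t : nat) (X Z : T).
Hypothesis hX : (1 - xT) * X = 1.
Hypothesis hZ : (1 - zT) * Z = 1.

Lemma thxX : th true X = xT * X * X.
Proof.
have H := congr1 (th true) hX.
rewrite thM thB th1 thx_x in H.
have e : (1 - xT) * th true X = xT * X.
  by apply/eqP; rewrite -subr_eq0 -H; apply/eqP; ring.
transitivity (X * ((1 - xT) * th true X)); first by rewrite mulrA (mulrC X) hX mul1r.
by rewrite e; ring.
Qed.
Lemma thzX : th false X = 0.
Proof.
have H := congr1 (th false) hX.
rewrite thM thB th1 thz_x subrr mul0r add0r in H.
transitivity (X * ((1 - xT) * th false X)); first by rewrite mulrA (mulrC X) hX mul1r.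
by rewrite H mulr0.
Qed.
Lemma thzZ : th false Z = zT * Z * Z.
Proof.
have H := congr1 (th false) hZ.
rewrite thM thB th1 thz_z in H.
have e : (1 - zT) * th false Z = zT * Z.
  by apply/eqP; rewrite -subr_eq0 -H; apply/eqP; ring.
transitivity (Z * ((1 - zT) * th false Z)); first by rewrite mulrA (mulrC Z) hZ mul1r.
by rewrite e; ring.
Qed.
Lemma thxZ : th true Z = 0.
Proof.
have H := congr1 (th true) hZ.
rewrite thM thB th1 thx_z subrr mul0r add0r in H.
transitivity (Z * ((1 - zT) * th true Z)); first by rewrite mulrA (mulrC Z) hZ mul1r.
by rewrite H mulr0.
Qed.

Lemma thM3 k (a b c : T) : th k (a * b * c) = th k a * b * c + a * th k b * c + a * b * th k c.
Proof. rewrite !thM; ring. Qed.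

Let u : T := 1 - xT * zT.
Lemma thu k : th k u = - (xT * zT).
Proof.
rewrite /u thB th1 thM; case: k; rewrite ?thx_x ?thx_z ?thz_x ?thz_z; ring.
Qed.

Definition Gt : T := - (u ^+ t.+1 * Z) - xT * u ^+ (2 * t.+1) * X ^+ t.+2
   + u ^+ (2 * t.+1) * X ^+ t.+1 * Z.

Lemma LGt : Lop t.+1 Gt = 0.
Proof.
have [B eB] : {B : T | B = u ^+ t} by exists (u ^+ t).
have [W eW] : {W : T | W = X ^+ t} by exists (X ^+ t).
have e2 : (2 * t.+1 = (t.*2).+1.+1)%N by rewrite mul2n doubleS.
have eu1 : u ^+ t.+1 = u * B by (rewrite exprS eB; reflexivity).
have eu2 : u ^+ (t.*2).+1 = u * B * B by (rewrite exprS -addnn exprD mulrA eB; reflexivity).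
have eu3 : u ^+ (t.*2).+2 = u * u * B * B by (rewrite exprS eu2 !mulrA; reflexivity).
have ex1 : X ^+ t.+1 = X * W by (rewrite exprS eW; reflexivity).
have ex2 : X ^+ t.+2 = X * X * W by (rewrite !exprS mulrA eW; reflexivity).
have dA k : th k (u ^+ t.+1) = t.+1%:R * B * (- (xT * zT)) by (rewrite thP thu eB; reflexivity).
have dA2 k : th k (u ^+ (t.*2).+2) = (t.*2).+2%:R * (u * B * B) * (- (xT * zT)).
  rewrite thP thu eu2; reflexivity.
have dX1 k : th k (X ^+ t.+1) = t.+1%:R * W * th k X by (rewrite thP eW; reflexivity).
have dX2 k : th k (X ^+ t.+2) = t.+2%:R * (X * W) * th k X by (rewrite thP ex1; reflexivity).
rewrite /Lop /Gt e2 !thD !thN.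
rewrite !(thM _ (u ^+ t.+1) Z) !(thM3 _ xT (u ^+ (t.*2).+2) (X ^+ t.+2)).
rewrite !(thM3 _ (u ^+ (t.*2).+2) (X ^+ t.+1) Z).
erewrite (dA true), (dA false), (dA2 true), (dA2 false), (dX1 true), (dX1 false).
erewrite (dX2 true), (dX2 false), thxX, thzX, thxZ, thzZ, thx_x, thz_x.
erewrite eu1, eu3, ex1, ex2. unfold u.
have hX0 : (1 - xT) * X - 1 = 0 by rewrite hX subrr; reflexivity.
have hZ0 : (1 - zT) * Z - 1 = 0 by rewrite hZ subrr; reflexivity.
apply: (@eq_trans _ _ ((- 2%:R*zT*zT*B*B*W*Z + 2%:R*zT*zT*B*B*W*Z*Z + 1%:R*zT*zT*zT*B*B*W*Z - 3%:R*zT*zT*zT*B*B*W*Z*Z + 1%:R*zT*zT*zT*zT*B*B*W*Z*Z + 1%:R*xT*zT*B*B*W*X*Z + 1%:R*xT*zT*B*B*W*X*Z*t%:R + 1%:R*xT*zT*zT*zT*B*B*W*Z - 1%:R*xT*zT*zT*zT*B*B*W*Z*Z + 1%:R*xT*zT*zT*zT*zT*B*B*W*Z*Z - 2%:R*xT*xT*zT*B*B*W*X*X - 1%:R*xT*xT*zT*B*B*W*X*X*t%:R - 2%:R*xT*xT*zT*zT*B*B*W*X*Z - 2%:R*xT*xT*zT*zT*B*B*W*X*Z*t%:R + 4%:R*xT*xT*xT*zT*zT*B*B*W*X*X + 2%:R*xT*xT*xT*zT*zT*B*B*W*X*X*t%:R + 1%:R*xT*xT*xT*zT*zT*zT*B*B*W*X*Z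 + 1%:R*xT*xT*xT*zT*zT*zT*B*B*W*X*Z*t%:R - 2%:R*xT*xT*xT*xT*zT*zT*zT*B*B*W*X*X - 1%:R*xT*xT*xT*xT*zT*zT*zT*B*B*W*X*X*t%:R) * ((1 - xT) * X - 1) + (- 1%:R*zT*B*Z + 1%:R*zT*B*B*W*X*Z + 2%:R*zT*zT*B*B*W*Z - 2%:R*zT*zT*B*B*W*X*Z - 1%:R*zT*zT*zT*B*B*W*Z + 1%:R*zT*zT*zT*B*B*W*X*Z + 1%:R*xT*zT*zT*B*Z - 1%:R*xT*zT*zT*zT*B*B*W*Z) * ((1 - zT) * Z - 1))).
  rewrite -mul2n; ring.
rewrite hX0 hZ0 !mulr0 addr0; reflexivity.
Qed.
End Main.


Lemma Lop_coef s (F : T) : Lop s F = 0 -> forall j i,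
  i.+1%:R * F j i.+1 + j%:R * F j i - i%:R * F j i - F j i
  + (if j is j'.+1 then s%:R * F j' i - j'%:R * F j' i else 0) = 0.
Proof.
move=> H j i; have := congr1 (fun f : T => f j i.+1) H.
rewrite /Lop !serD !serN !ser0 natM !thE !coef_z !thE.
case: j => [|j]; rewrite ?coef_x0 ?coef_x ?coef_z ?thE ?mulr0 ?subr0 ?addr0.
  by move=> <-; ring.
by move=> <-; ring.
Qed.

Lemma hcoef_low s i j : (j <= i)%N -> hcoef s i j = 0.
Proof.
case: i => [|i] /= H; first by rewrite H.
by rewrite H.
Qed.

Lemma uniqF s (F : T) : Lop s F = 0 -> (forall j, F j 0%N = hcoef s 0 j) ->
  forall i j, F j i = hcoef s i j.
Proof.
move=> HL H0; elim=> [|i IH] j; first exact: H0.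
have E := Lop_coef HL j i.
have ni : (i.+1%:R : rat) != 0 by rewrite pnatr_eq0.
case: j E => [|j] E.
  rewrite IH (hcoef_low s (leq0n i)) !mulr0 subr0 !addr0 in E.
  rewrite (hcoef_low s (leq0n i.+1)).
  by move/eqP: E; rewrite mulf_eq0 (negbTE ni) /= => /eqP.
rewrite !IH in E.
have eF : F j.+1 i.+1 = - ((j.+1%:R - i%:R - 1) * hcoef s i j.+1
                          + (s%:R - j%:R) * hcoef s i j) / i.+1%:R.
  apply: (mulIf ni); rewrite divfK // mulrC.
  by apply/eqP; rewrite -subr_eq0 -E; apply/eqP; ring.
rewrite eF /=.
case: (leqP j i) => Hji.
  rewrite (hcoef_low s Hji) mulr0 addr0.
  rewrite ltnS Hji.
  case: (ltnP j i) => Hji'.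
    by rewrite (hcoef_low s (Hji' : (j.+1 <= i)%N)) mulr0 oppr0 mul0r.
  have -> : j = i by apply/eqP; rewrite eqn_leq Hji Hji'.
  have -> : (i.+1%:R - i%:R - 1 : rat) = 0 by rewrite -natr1; ring.
  by rewrite mul0r oppr0 mul0r.
rewrite ltnS leqNgt Hji /=.
rewrite -!natr1; field; by rewrite natr1.
Qed.

Definition r0 (f : T) : S1 := fun j => f j 0%N.
Lemma r0M (f g : T) : r0 (f * g) = r0 f * r0 g.
Proof.
apply: funext => j; rewrite /r0 coefM serM; apply: eq_bigr => a _.
by rewrite big_ord_recl big_ord0 addr0.
Qed.
Lemma r0D (f g : T) : r0 (f + g) = r0 f + r0 g. Proof. by []. Qed.
Lemma r0N (f : T) : r0 (- f) = - r0 f. Proof. by []. Qed.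
Lemma r01 : r0 1 = 1.
Proof. by apply: funext => j; rewrite /r0 coef1 ser1 andbT. Qed.
Lemma r0X (f : T) n : r0 (f ^+ n) = r0 f ^+ n.
Proof. by elim: n => [|n IH]; rewrite ?r01 // !exprS r0M IH. Qed.
Definition x1 : S1 := smono 1 1.
Lemma r0x : r0 xT = x1.
Proof.
apply: funext => j; rewrite /r0 /xT /x1 /mono /smono.
by case: (j == 1%N).
Qed.
Lemma r0z : r0 zT = 0.
Proof.
apply: funext => j; rewrite /r0 /zT /mono /smono.
by case: (j == 0%N).
Qed.

Lemma coef_x1 (P : S1) j : (x1 * P) j = if j is j'.+1 then P j' else 0.
Proof. by rewrite smonoM; case: j => [|j] //=; rewrite subn1 mul1r. Qed.

Lemma invpow (Y : S1) : (1 - x1) * Y = 1 ->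
  forall n j, (Y ^+ n) j = 'C(n + j - 1, j)%:R.
Proof.
move=> hY; elim=> [|n IH] j.
  rewrite expr0 ser1; case: j => [|j] /=.
  by rewrite bin0.

  by rewrite add0n subn1 /= bin_small.
have e : (1 - x1) * Y ^+ n.+1 = Y ^+ n by rewrite exprS mulrA hY mul1r.
have c k : (Y ^+ n.+1) k = (Y ^+ n) k + (if k is k'.+1 then (Y ^+ n.+1) k' else 0).
  rewrite -e mulrBl mul1r serB coef_x1; case: k => [|k]; first by rewrite !subr0.
  by rewrite subrK.
elim: j => [|j IHj]; first by rewrite c IH addr0 !addn0 !bin0.
rewrite c IH IHj.
have -> : (n + j.+1 - 1 = n + j)%N by lia.
have -> : (n.+1 + j - 1 = n + j)%N by lia.
have -> : (n.+1 + j.+1 - 1 = (n + j).+1)%N by lia.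
by rewrite binS natrD.
Qed.

Lemma baseG t (X Z : T) : (1 - xT) * X = 1 -> (1 - zT) * Z = 1 ->
  forall j, Gt t X Z j 0%N = hcoef t.+1 0 j.
Proof.
move=> hX hZ j.
have hZ1 : r0 Z = 1.
  have := congr1 r0 hZ; rewrite r0M r0D r0N r01 r0z subr0 mul1r; exact.
have hX1 : (1 - x1) * r0 X = 1.
  have := congr1 r0 hX; rewrite r0M r0D r0N r01 r0x; exact.
have -> : Gt t X Z j 0%N = r0 (Gt t X Z) j by [].
rewrite /Gt !(r0D, r0N, r0M, r0X) r01 r0x r0z hZ1 mulr0 subr0 !expr1n !mul1r !mulr1.
rewrite !serD !serN ser1 coef_x1 !(invpow hX1).
case: j => [|k] /=.
  by rewrite bin0 subr0; ring.
rewrite (invpow hX1).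
have -> : (t.+2 + k - 1 = t.+1 + k)%N by lia.
have -> : (t.+1 + k.+1 - 1 = t.+1 + k)%N by lia.
have hb := mul_bin_left (t.+1 + k) k.
rewrite addnK in hb.
have hbR : (k.+1%:R * 'C(t.+1 + k, k.+1)%:R = t.+1%:R * 'C(t.+1 + k, k)%:R :> rat).
  by rewrite -!natrM hb.
have nt : (t.+1%:R : rat) != 0 by rewrite pnatr_eq0.
have eb : ('C(t.+1 + k, k)%:R : rat) = k.+1%:R * 'C(t.+1 + k, k.+1)%:R / t.+1%:R.
  by rewrite hbR mulrAC mulfV // mul1r.
rewrite eb; field; by rewrite addrC natr1.
Qed.

Local Close Scope ring_scope.
Local Open Scope fps_scope.

Theorem proposition14 (s : nat) (invz invx : fps) :
  (0 < s)%N ->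
  (1 - 'z) * invz = 1 ->
  (1 - 'x) * invx = 1 ->
  Hser s =
    - ((1 - 'x * 'z) ^+ s * invz)
    - 'x * (1 - 'x * 'z) ^+ (2 * s) * invx ^+ s.+1
    + (1 - 'x * 'z) ^+ (2 * s) * invx ^+ s * invz.
Proof.
move=> hs hZ hX.
case: s hs => [//|t] _.
rewrite !fps_mulE !fps_addE !fps_oppE fps_oneE fps_zE in hZ.
rewrite !fps_mulE !fps_addE !fps_oppE fps_oneE fps_xE in hX.
rewrite !fps_expE !fps_mulE !fps_addE !fps_oppE fps_oneE fps_xE fps_zE.
have H := uniqF (@LGt t _ _ hX hZ) (@baseG t _ _ hX hZ).
apply: extT => j i; rewrite /Hser.
symmetry; exact: H.
Qed.
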